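(* Let $\Omega\subset\mathbb{R}^n$ be a domain with $\mathrm{width}(\Omega)<+\infty$, $f\in L^\infty(\Omega)$, $g\in C(\partial\Omega)\cap L^\infty(\partial\Omega)$, $(\varepsilon_i)$ a sequence of positive numbers with $\varepsilon_i\to0$, and for each $i$ let $u_i:\overline\Omega\to\mathbb{R}$ be a bounded solution of $\Delta^{\varepsilon_i}_\infty u_i=\varepsilon_i^2 f$ in $\Omega$, $u_i=g$ on $\partial\Omega$. Then for every $y_0\in\partial\Omega$ and every $\varepsilon>0$ there exist $\delta>0$ and $N\in\mathbb{N}$ such that for all $x\in\Omega$ with $d(y_0,x)\le\delta$ and all $i>N$, \[ |u_i(x)-g(y_0)|\le\varepsilon. \]
   Context: $d(x,y)$ is the intrinsic metric of $\overline\Omega$ (infimum of lengths of paths in $\overline\Omega$ from $x$ to $y$); $\mathrm{width}(\Omega)=\sup_{x\in\Omega}\inf_{y\in\partial\Omega}d(y,x)$. For $\varepsilon>0$, $B_x(\varepsilon)=\{y\in\overline\Omega: d(x,y)<\varepsilon\}$ and $\Delta^{\varepsilon}_\infty w(x)=\inf_{y\in B_x(\varepsilon)}w(y)+\sup_{y\in B_x(\varepsilon)}w(y)-2w(x)$. *)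

(* Defs.v *)
(* R^n is modelled as 'rV[R]_n with the
   Euclidean norm defined below (path lengths use the Euclidean norm). *)
From HB Require Import structures.
From mathcomp Require Import all_boot all_order all_algebra.
From mathcomp Require Import all_classical all_reals all_analysis.
Set Implicit Arguments. Unset Strict Implicit. Unset Printing Implicit Defensive.
Import Order.TTheory GRing.Theory Num.Theory.
Import numFieldNormedType.Exports.
Local Open Scope classical_set_scope.
Local Open Scope ring_scope.

Section Defs.
Context {R : realType} {n : nat}.

Definition enorm (x : 'rV[R]_n) : R := Num.sqrt (\sum_(i < n) x ord0 i ^+ 2).

Definition is_partition01 (k : nat) (t : nat -> R) : Prop :=
  t 0%N = 0 /\ t k = 1 /\ forall i, (i < k)%N -> t i <= t i.+1.

Definition path_length (gamma : R -> 'rV[R]_n) : \bar R :=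
  ereal_sup [set l : \bar R | exists (k : nat) (t : nat -> R),
     is_partition01 k t /\
     l = ((\sum_(i < k) enorm (gamma (t i.+1) - gamma (t i)))%:E)%E].

Definition bdry (Om : set 'rV[R]_n) : set 'rV[R]_n := closure Om `\` interior Om.

(* intrinsic metric of the closure of Om: infimum of lengths of continuous
   paths in closure Om from x to y (+oo if there is none) *)
Definition idist (Om : set 'rV[R]_n) (x y : 'rV[R]_n) : \bar R :=
  ereal_inf [set path_length gamma | gamma in
    [set gamma : R -> 'rV[R]_n | {within `[0, 1], continuous gamma} /\
       gamma 0 = x /\ gamma 1 = y /\
       (forall t, 0 <= t <= 1 -> closure Om (gamma t))]].

Definition width (Om : set 'rV[R]_n) : \bar R :=
  ereal_sup [set ereal_inf [set idist Om y x | y in bdry Om] | x in Om].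

Definition iball (Om : set 'rV[R]_n) (x : 'rV[R]_n) (eps : R) : set 'rV[R]_n :=
  [set y | closure Om y /\ (idist Om x y < eps%:E)%E].

Definition eps_lap (Om : set 'rV[R]_n) (eps : R) (w : 'rV[R]_n -> R)
  (x : 'rV[R]_n) : R :=
  inf (w @` iball Om x eps) + sup (w @` iball Om x eps) - 2 * w x.

Definition domain (Om : set 'rV[R]_n) : Prop :=
  Om !=set0 /\ open Om /\ connected Om.

End Defs.

(* Main.v *)
Require Import Defs.
From HB Require Import structures.
From mathcomp Require Import all_boot all_order all_algebra.
From mathcomp Require Import all_classical all_reals all_analysis.
From mathcomp Require Import ring lra zify.
Set Implicit Arguments. Unset Strict Implicit. Unset Printing Implicit Defensive.
Import Order.TTheory GRing.Theory Num.Theory.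
Import numFieldNormedType.Exports.
Local Open Scope classical_set_scope.
Local Open Scope ring_scope.
Section E.
Context {R : realType} {n : nat}.
Local Notation V := 'rV[R]_n.

Lemma enorm_ge0 (x : V) : 0 <= enorm x.
Proof. exact: sqrtr_ge0. Qed.

Lemma enorm0 : enorm (0 : V) = 0.
Proof. rewrite /enorm big1 ?sqrtr0 // => i _; rewrite mxE expr0n. by []. Qed.

Lemma enormN (x : V) : enorm (- x) = enorm x.
Proof. by rewrite /enorm; congr Num.sqrt; apply: eq_bigr => i _; rewrite mxE sqrrN. Qed.

Lemma enormB (x y : V) : enorm (x - y) = enorm (y - x).
Proof. by rewrite -enormN opprB. Qed.

Lemma sumsq_ge0 (x : V) : 0 <= \sum_(i < n) x ord0 i ^+ 2.
Proof. by apply: sumr_ge0 => i _; rewrite sqr_ge0. Qed.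

Lemma coord_le_enorm (x : V) i : `|x ord0 i| <= enorm x.
Proof.
rewrite /enorm -sqrtr_sqr; apply: ler_wsqrtr.
rewrite (bigD1 i) //= lerDl; apply: sumr_ge0 => j _; exact: sqr_ge0.
Qed.

Lemma norm_le_enorm (x : V) : `|x| <= enorm x.
Proof.
rewrite (_ : `|x| = mx_norm x) // mx_normrE.
elim/big_ind: _ => //; first exact: enorm_ge0.
  by move=> a b ha hb; rewrite ge_max ha hb.
case=> i j _ /=; rewrite (ord1 i); exact: coord_le_enorm.
Qed.

Lemma enorm_le_norm (x : V) : enorm x <= (n%:R + 1) * `|x|.
Proof.
rewrite /enorm -[X in _ <= X]ger0_norm ?mulr_ge0 ?addr_ge0 ?ler0n //.
rewrite -sqrtr_sqr; apply: ler_wsqrtr.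
have h : forall i, x ord0 i ^+ 2 <= `|x| ^+ 2.
  move=> i; rewrite -real_normK ?num_real // lerXn2r ?nnegrE ?normr_ge0 //.
  rewrite (_ : `|x| = mx_norm x) // mx_normrE.
  exact: (le_bigmax _ (fun ij : 'I_1 * 'I_n => `|x ij.1 ij.2|) (ord0, i)).
apply: (le_trans (ler_sum _ (fun i _ => h i))).
rewrite sumr_const card_ord exprMn.
have hx : 0 <= `|x| ^+ 2 by rewrite sqr_ge0.
rewrite -mulr_natr.
have hn : (n%:R : R) <= (n%:R + 1) ^+ 2.
  have h0 : (0 : R) <= n%:R by rewrite ler0n.
  nra.
rewrite -mulr_natr mul1r; nra.
Qed.

End E.
Section E2.
Context {R : realType} {n : nat}.
Local Notation V := 'rV[R]_n.

Lemma sum_quad (x y : V) (t : R) :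
  \sum_(i < n) (t * x ord0 i + y ord0 i) ^+ 2 =
  t ^+ 2 * (\sum_(i < n) x ord0 i ^+ 2) + 2 * t * (\sum_(i < n) x ord0 i * y ord0 i)
  + \sum_(i < n) y ord0 i ^+ 2.
Proof.
rewrite !mulr_sumr -!big_split /=; apply: eq_bigr => i _; ring.
Qed.

Lemma cauchy_schwarz (x y : V) :
  (\sum_(i < n) x ord0 i * y ord0 i) ^+ 2 <=
  (\sum_(i < n) x ord0 i ^+ 2) * (\sum_(i < n) y ord0 i ^+ 2).
Proof.
set A := \sum_(i < n) x ord0 i ^+ 2; set B := \sum_(i < n) _ * _;
set C := \sum_(i < n) y ord0 i ^+ 2.
have q t : 0 <= t ^+ 2 * A + 2 * t * B + C.
  by rewrite -sum_quad; apply: sumr_ge0 => i _; exact: sqr_ge0.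
have A0 : 0 <= A by apply: sumr_ge0 => i _; exact: sqr_ge0.
have [Az|Ap] := eqVneq A 0.
  have xz : forall i, x ord0 i = 0.
    move=> i; apply/eqP; rewrite -sqrf_eq0; apply/eqP.
    move: Az; rewrite /A => /eqP; rewrite psumr_eq0; last by move=> j _; exact: sqr_ge0.
    by move=> /allP /(_ i) /(_ (mem_index_enum _)) /implyP /(_ isT) /eqP.
  have -> : B = 0 by rewrite /B big1 // => i _; rewrite xz mul0r.
  by rewrite expr0n /= mulr_ge0 // /C; apply: sumr_ge0 => i _; exact: sqr_ge0.
have Agt : 0 < A by rewrite lt_def Ap A0.
have := q (- B / A).
have -> : (- B / A) ^+ 2 * A + 2 * (- B / A) * B + C = C - B ^+ 2 / A.
  by field; rewrite Ap.
rewrite subr_ge0 ler_pdivrMr // => h.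
by rewrite mulrC.
Qed.

Lemma enormD (x y : V) : enorm (x + y) <= enorm x + enorm y.
Proof.
rewrite /enorm.
set A := \sum_(i < n) x ord0 i ^+ 2; set C := \sum_(i < n) y ord0 i ^+ 2.
set B := \sum_(i < n) x ord0 i * y ord0 i.
have A0 : 0 <= A by apply: sumr_ge0 => i _; exact: sqr_ge0.
have C0 : 0 <= C by apply: sumr_ge0 => i _; exact: sqr_ge0.
have e : \sum_(i < n) (x + y) ord0 i ^+ 2 = A + 2 * B + C.
  transitivity (\sum_(i < n) (1 * x ord0 i + y ord0 i) ^+ 2).
    by apply: eq_bigr => i _; rewrite mxE mul1r.
  by rewrite sum_quad expr1n !mul1r mulr1.
rewrite e -[X in _ <= X]ger0_norm ?addr_ge0 ?sqrtr_ge0 // -sqrtr_sqr.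
apply: ler_wsqrtr.
have hB : B <= Num.sqrt A * Num.sqrt C.
  rewrite -sqrtrM //; apply: (le_trans (ler_norm B)); rewrite -sqrtr_sqr.
  apply: ler_wsqrtr; exact: cauchy_schwarz.
rewrite sqrrD !sqr_sqrtr //; nra.
Qed.
End E2.
Section P.
Context {R : realType} {n : nat}.
Local Notation V := 'rV[R]_n.

Lemma within01P (g : R -> V) : {within `[0, 1], continuous g} <->
  (forall x, 0 <= x <= 1 -> forall e, 0 < e -> exists2 d, 0 < d &
     forall s, 0 <= s <= 1 -> `|s - x| < d -> `|g s - g x| < e).
Proof.
rewrite subspace_continuousP; split.
  move=> h x x01 e e0.
  have := h x; rewrite /= in_itv /= x01 => /(_ isT) /cvgrPdist_lt /(_ e e0).
  rewrite near_withinE => /nbhs_ballP [d /= d0 hd].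
  exists d => // s s01 sx; rewrite -normrN opprB; apply: hd => /=.
    by rewrite /ball /= -normrN opprB.
  by rewrite /= in_itv /= s01.
move=> h x; rewrite /= in_itv /= => x01; apply/cvgrPdist_lt => e e0.
have [d d0 hd] := h x x01 e e0.
rewrite near_withinE; apply/nbhs_ballP; exists d => //= s.
rewrite /ball /= in_itv /= => sx s01; rewrite -normrN opprB; apply: hd => //.
by rewrite -normrN opprB.
Qed.

Variable Om : set V.
Implicit Types (g : R -> V) (x y : V) (t : nat -> R) (k : nat).

Definition pathin (g : R -> V) x y := {within `[0, 1], continuous g} /\
  g 0 = x /\ g 1 = y /\ (forall s : R, 0 <= s <= 1 -> closure Om (g s)).

Definition psum (g : R -> V) k (t : nat -> R) :=
  \sum_(i < k) enorm (g (t i.+1) - g (t i)).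

Lemma psum_ge0 g k t : 0 <= psum g k t.
Proof. by apply: sumr_ge0 => i _; exact: enorm_ge0. Qed.

Lemma idist_le g x y : pathin g x y -> (idist Om x y <= path_length g)%E.
Proof. by move=> h; apply: ereal_inf_lbound; exists g. Qed.

Lemma idist_ltP x y e : (idist Om x y < e)%E ->
  exists g, pathin g x y /\ (path_length g < e)%E.
Proof. by move=> /ereal_inf_lt [_ [g hg <-] h]; exists g. Qed.

Lemma psum_le g k t : is_partition01 k t -> ((psum g k t)%:E <= path_length g)%E.
Proof. by move=> h; apply: ereal_sup_ubound; exists k, t. Qed.

Lemma pl_le g L : (forall k t, is_partition01 k t -> psum g k t <= L) ->
  (path_length g <= L%:E)%E.
Proof. by move=> h; apply: ge_ereal_sup => _ [k [t [ht ->]]]; rewrite lee_fin h. Qed.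

Lemma pl_ge0 g : (0 <= path_length g)%E.
Proof.
apply: (le_trans _ (psum_le g (k := 1) (t := fun i => if i is 0%N then 0 else 1) _)).
  by rewrite lee_fin psum_ge0.
by split => //; split => // -[|i] //.
Qed.

Lemma part_mono k t : is_partition01 k t -> forall p q, (p <= q <= k)%N -> t p <= t q.
Proof.
move=> [_ [_ h]] p; elim=> [|q IH] /andP [pq qk].
  by move: pq; rewrite leqn0 => /eqP ->.
move: pq; rewrite leq_eqVlt => /orP [/eqP -> //|pq].
apply: le_trans (h q qk); apply: IH; rewrite -ltnS pq /=; exact: ltnW.
Qed.

Lemma part_bounds k t : is_partition01 k t -> forall p, (p <= k)%N -> 0 <= t p <= 1.
Proof.
move=> h p pk; have [h0 [h1 _]] := h.
apply/andP; split; [rewrite -h0|rewrite -h1]; apply: (part_mono h);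
  by rewrite ?pk ?leqnn.
Qed.

Lemma chord_le g x y : pathin g x y -> (`|y - x|%:E <= path_length g)%E.
Proof.
move=> [_ [g0 [g1 _]]].
apply: le_trans (psum_le g (k := 1) (t := fun i => if i is 0%N then 0 else 1) _).
  rewrite lee_fin /psum big_ord1 /= g0 g1; exact: norm_le_enorm.
by split => //; split => // -[|i] //.
Qed.

Lemma idist_ge_norm x y : (`|y - x|%:E <= idist Om x y)%E.
Proof. by apply: le_ereal_inf_tmp => _ [g hg <-]; exact: chord_le. Qed.

Lemma idist_refl x : closure Om x -> (idist Om x x <= 0)%E.
Proof.
move=> cx; apply: (le_trans (idist_le (g := fun _ => x) _)).
  split; first by apply/within01P => s _ e e0; exists 1 => // t _ _; rewrite subrr normr0.
  by [].
apply: pl_le => k t _.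
by rewrite /psum big1 // => i _; rewrite subrr enorm0.
Qed.

End P.
Section Rev.
Context {R : realType} {n : nat}.
Local Notation V := 'rV[R]_n.
Variable Om : set V.
Implicit Types (g : R -> V) (x y : V) (t : nat -> R) (k : nat).

Lemma pathin_rev g x y : pathin Om g x y -> pathin Om (fun s => g (1 - s)) y x.
Proof.
move=> [gc [g0 [g1 gC]]]; split; last split; last split.
- apply/within01P => x0 x01 e e0.
  have x01' : 0 <= 1 - x0 <= 1 by move: x01 => /andP[? ?]; apply/andP; split; lra.
  have [d d0 hd] := (proj1 (within01P g) gc) _ x01' e e0.
  exists d => // s s01 sx; apply: hd.
    by move: s01 => /andP[? ?]; apply/andP; split; lra.
  by rewrite (_ : 1 - s - (1 - x0) = - (s - x0)) ?normrN //; ring.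
- by rewrite subr0.
- by rewrite subrr.
- move=> s /andP [? ?]; apply: gC; apply/andP; split; lra.
Qed.

Definition rev_path g := fun s : R => g (1 - s).

Lemma pl_rev g : (path_length (rev_path g) <= path_length g)%E.
Proof.
apply: ge_ereal_sup => _ [k [t [ht ->]]].
have ht' : is_partition01 k (fun i => 1 - t (k - i)%N).
  have [t0 [tk tm]] := ht.
  split; first by rewrite subn0 tk subrr.
  split; first by rewrite subnn t0 subr0.
  move=> i ik; rewrite lerD2l lerN2; apply: (part_mono ht).
  by rewrite leq_sub2l //= leq_subr.
apply: le_trans (psum_le _ ht'); rewrite lee_fin le_eqVlt; apply/orP; left; apply/eqP.
rewrite /psum [in RHS](reindex_inj rev_ord_inj) /=.
apply: eq_bigr => i _; rewrite enormB /rev_path.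
have ik := ltn_ord i.
have -> : (k - (k - i.+1).+1 = i)%N by lia.
by have -> : (k - (k - i.+1) = i.+1)%N by lia.
Qed.

Lemma idist_sym x y : (idist Om y x <= idist Om x y)%E.
Proof.
apply: le_ereal_inf_tmp => _ [g hg <-].
apply: le_trans (pl_rev g); apply: idist_le; exact: pathin_rev.
Qed.
End Rev.
Section Glue.
Context {R : realType} {n : nat}.
Local Notation V := 'rV[R]_n.
Implicit Types (g : R -> V) (x y : V) (t : nat -> R) (k : nat).

Definition gl k1 t1 t2 : nat -> R := fun p => if (p <= k1)%N then t1 p else t2 (p - k1)%N.

Lemma psum_nat g k t : psum g k t = \sum_(0 <= i < k) enorm (g (t i.+1) - g (t i)).
Proof. by rewrite /psum big_mkord. Qed.

Lemma glue_psum g k1 k2 t1 t2 : t1 k1 = t2 0%N ->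
  psum g (k1 + k2) (gl k1 t1 t2) = psum g k1 t1 + psum g k2 t2.
Proof.
move=> e; rewrite !psum_nat (big_cat_nat _ (leq_addr k2 k1)) //=; congr (_ + _).
  apply: eq_big_nat => i /andP [_ ik]; rewrite /gl ik ltnW //.
rewrite -{1}(add0n k1) big_addn.
rewrite (_ : (k1 + k2 - k1 = k2)%N); last by lia.
apply: eq_big_nat => i /andP [_ ik].
rewrite /gl; have -> : (i + k1 <= k1)%N = (i == 0)%N by lia.
rewrite (_ : ((i + k1).+1 <= k1)%N = false); last by lia.
rewrite (_ : ((i + k1).+1 - k1 = i.+1)%N); last by lia.
case: eqP => [->|_]; first by rewrite e.
by rewrite addnK.
Qed.

Lemma glue_mono k1 k2 t1 t2 : t1 k1 = t2 0%N ->
  (forall p, (p < k1)%N -> t1 p <= t1 p.+1) -> (forall p, (p < k2)%N -> t2 p <= t2 p.+1) ->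
  forall p, (p < k1 + k2)%N -> gl k1 t1 t2 p <= gl k1 t1 t2 p.+1.
Proof.
move=> e h1 h2 p pk; rewrite /gl.
have [pk1|pk1] := ltnP p k1.
  by rewrite ltnW //; apply: h1.
case: (leqP p k1) => pk1'.
  have -> : p = k1 by apply/eqP; rewrite eqn_leq pk1 pk1'.
  rewrite subSnn e; apply: h2; lia.
rewrite subSn; last by lia.
apply: h2; lia.
Qed.

Lemma glue_end k1 k2 t1 t2 : t1 k1 = t2 0%N -> gl k1 t1 t2 (k1 + k2)%N = t2 k2.
Proof.
move=> e; rewrite /gl; case: leqP => h.
  have -> : k2 = 0%N by lia.
  by rewrite addn0.
by rewrite addKn.
Qed.

Lemma glue_start k1 t1 t2 : gl k1 t1 t2 0%N = t1 0%N.
Proof. by rewrite /gl leq0n. Qed.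

End Glue.
Section Sub.
Context {R : realType} {n : nat}.
Local Notation V := 'rV[R]_n.
Variable Om : set V.
Implicit Types (g : R -> V) (x y : V) (t : nat -> R) (k : nat).

Lemma pathin_sub g x y a b : pathin Om g x y -> 0 <= a -> a <= b -> b <= 1 ->
  pathin Om (fun tau => g (a + (b - a) * tau)) (g a) (g b).
Proof.
move=> [gc [_ [_ gC]]] a0 ab b1.
have inr tau : 0 <= tau <= 1 -> 0 <= a + (b - a) * tau <= 1.
  move=> /andP [t0 t1]; have h : 0 <= (b - a) * tau <= b - a.
    apply/andP; split; first by rewrite mulr_ge0 // subr_ge0.
    by rewrite ler_piMr // subr_ge0.
  move: h => /andP [? ?]; apply/andP; split; lra.
split; last split; last split.
- apply/within01P => t0 t01 e e0.
  have [d d0 hd] := (proj1 (within01P g) gc) _ (inr _ t01) e e0.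
  exists (d / (b - a + 1)); first by rewrite divr_gt0 //; lra.
  move=> s s01 st; apply: hd; first exact: inr.
  have -> : a + (b - a) * s - (a + (b - a) * t0) = (b - a) * (s - t0) by ring.
  rewrite normrM ger0_norm ?subr_ge0 //.
  have hba : 0 < b - a + 1 by lra.
  apply: (le_lt_trans (y := (b - a) * (d / (b - a + 1)))).
    by rewrite ler_wpM2l ?subr_ge0 // ltW.
  rewrite mulrA ltr_pdivrMr // mulrC ltr_pM2l //; lra.
- by rewrite mulr0 addr0.
- by rewrite mulr1 addrC subrK.
- by move=> s s01; apply: gC; apply: inr.
Qed.

Lemma subpath_bound g x y K s Lg i j :
  pathin Om g x y -> (path_length g <= Lg%:E)%E -> is_partition01 K s -> (i <= j <= K)%N ->
  (idist Om (g (s i)) (g (s j)) <=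
    (Lg - psum g K s + \sum_(i <= p < j) enorm (g (s p.+1) - g (s p)))%:E)%E.
Proof.
move=> hg hL hs /andP [ij jK].
have [s0 [sK smono]] := hs.
have a0 : 0 <= s i by have /andP[] := part_bounds hs (leq_trans ij jK).
have ab : s i <= s j by apply: (part_mono hs); rewrite ij jK.
have b1 : s j <= 1 by have /andP[] := part_bounds hs jK.
apply: le_trans (idist_le (pathin_sub hg a0 ab b1)) _.
apply: pl_le => k q hq.
have [q0 [qk qmono]] := hq.
set T2 := fun p => s i + (s j - s i) * q p.
set T3 := fun p => s (p + j)%N.
have e1 : s i = gl k T2 T3 0%N by rewrite glue_start /T2 q0 mulr0 addr0.
have e2 : T2 k = T3 0%N by rewrite /T2 /T3 qk mulr1 add0n addrC subrK.
have m2 : forall p, (p < k)%N -> T2 p <= T2 p.+1.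
  by move=> p pk; rewrite /T2 lerD2l ler_wpM2l ?subr_ge0 // qmono.
have m3 : forall p, (p < K - j)%N -> T3 p <= T3 p.+1.
  by move=> p pk; rewrite /T3 addSn smono //; lia.
have hT : is_partition01 (i + (k + (K - j))) (gl i s (gl k T2 T3)).
  split; first by rewrite glue_start.
  split; first by rewrite !glue_end // /T3 subnK.
  apply: glue_mono => //; first by move=> p pi; apply: smono; lia.
  exact: glue_mono.
have := psum_le g hT; rewrite !glue_psum // => h.
have h2 : (psum g i s + (psum g k T2 + psum g (K - j) T3) <= Lg).
  by rewrite -lee_fin; apply: le_trans h hL.
have dec : psum g K s = psum g i s + \sum_(i <= p < j) enorm (g (s p.+1) - g (s p))
    + psum g (K - j) T3.
  rewrite !psum_nat (big_cat_nat (n := j) (leq0n j) jK) /=.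
  rewrite (big_cat_nat (n := i) (leq0n i) ij) /=.
  congr (_ + _); rewrite -{1}(add0n j) big_addn.
  by apply: eq_big_nat => p _; rewrite /T3 addSn.
have -> : psum (fun tau => g (s i + (s j - s i) * tau)) k q = psum g k T2 by [].
rewrite dec; lra.
Qed.
End Sub.
Section UC.
Context {R : realType} {n : nat}.
Local Notation V := 'rV[R]_n.
Lemma unif_cont (g : R -> V) : {within `[0, 1], continuous g} ->
  forall e, 0 < e -> exists2 h, 0 < h & forall s s', 0 <= s <= 1 -> 0 <= s' <= 1 ->
    `|s - s'| < h -> `|g s - g s'| < e.
Proof.
move=> /within01P gc e e0.
pose K : set R := (`[0, 1])%classic.
have cK : compact K by exact: segment_compact.
pose P := fun i x' => forall s, K s -> `|s - x'| < i -> `|g s - g x'| < e.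
have H : forall x, K x -> \forall x' \near x & i \near (0:R)^'+, K x' -> P i x'.
  move=> x; rewrite /K /= in_itv /= => x01.
  have [d d0 hd] := gc x x01 (e / 2) (divr_gt0 e0 (ltr0Sn _ 1)).
  have d2 : 0 < d / 2 by rewrite divr_gt0.
  near=> x' h; rewrite /P /K /= => /[!in_itv] /= x'01 s /[!in_itv] /= s01 sx'.
  have hx : `|x' - x| < d / 2.
    near: x'; apply/nbhs_ballP; exists (d / 2) => //= y; rewrite /ball /=.
    by rewrite -normrN opprB.
  have hp : 0 < h by near: h; exact: nbhs_right_gt.
  have hl : h < d / 2 by near: h; exact: nbhs_right_lt.
  have h1 : `|g s - g x| < e / 2.
    apply: hd => //; rewrite (_ : s - x = (s - x') + (x' - x)); last by ring.
    apply: le_lt_trans (ler_normD _ _) _; lra.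
  have h2 : `|g x' - g x| < e / 2 by apply: hd => //; lra.
  rewrite (_ : g s - g x' = (g s - g x) - (g x' - g x)); last by rewrite opprB addrA subrK.
  apply: le_lt_trans (ler_normB _ _) _; lra.
have Hn : \forall h \near (0:R)^'+, K `<=` P h.
  exact: (proj2 (near_covering_withinP K) (proj1 (compact_near_coveringP K) cK)).

have [h [Hh hp]] := filter_ex (filterI Hn (nbhs_right_gt (0:R))).
exists h => // s s' s01 s'01 ss'; apply: Hh => //; by rewrite /K /= in_itv.
Unshelve. all: by end_near.
Qed.
End UC.
Section Ref.
Context {R : realType} {n : nat}.
Local Notation V := 'rV[R]_n.
Variable Om : set V.
Implicit Types (g : R -> V) (x y : V) (t : nat -> R) (k : nat).

Lemma enorm_sum (F : nat -> V) m :
  enorm (\sum_(0 <= q < m) F q) <= \sum_(0 <= q < m) enorm (F q).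
Proof.
elim: m => [|m IH]; first by rewrite !big_geq // enorm0.
rewrite !big_nat_recr //=; apply: le_trans (enormD _ _) _; by rewrite lerD2r.
Qed.

Lemma gl_left k1 t1 t2 p : (p <= k1)%N -> gl k1 t1 t2 p = t1 p.
Proof. by rewrite /gl => ->. Qed.

Lemma gl_right k1 t1 t2 p : t1 k1 = t2 0%N -> (k1 <= p)%N -> gl k1 t1 t2 p = t2 (p - k1)%N.
Proof.
move=> e kp; rewrite /gl; case: leqP => // pk.
have -> : p = k1 by apply/eqP; rewrite eqn_leq pk kp.
by rewrite subnn.
Qed.

Lemma refine g x y k t eta : pathin Om g x y -> is_partition01 k t -> 0 < eta ->
  exists K s, [/\ is_partition01 K s, psum g k t <= psum g K s &
    forall p, (p < K)%N -> enorm (g (s p.+1) - g (s p)) < eta].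
Proof.
move=> [gc _] ht eta0.
have e0 : 0 < eta / (n%:R + 1) by rewrite divr_gt0 // ltr_wpDl.
have [h h0 hh] := unif_cont gc e0.
pose M := (Num.trunc h^-1).+1.
have hM : h^-1 < M%:R by exact: truncnS_gt.
have M0 : (0 < M)%N by [].
have M0r : (0 : R) < M%:R by rewrite ltr0n.
have small : forall a b, 0 <= a <= 1 -> 0 <= b <= 1 -> `|a - b| < h ->
    enorm (g a - g b) < eta.
  move=> a b a01 b01 ab; apply: le_lt_trans (enorm_le_norm _) _.
  rewrite mulrC -ltr_pdivlMr ?ltr_wpDl //; exact: hh.
have [t0 [tk tmono]] := ht.
have main : forall k', (k' <= k)%N -> exists K s, [/\ s 0%N = t 0%N, s K = t k',
    (forall p, (p < K)%N -> s p <= s p.+1), psum g k' t <= psum g K s &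
    forall p, (p < K)%N -> enorm (g (s p.+1) - g (s p)) < eta].
  elim=> [_|k' IH k'k].
    by exists 0%N, t; split => //; rewrite /psum big_ord0 big_ord0.
  have [K [s [s0 sK smono sps ssm]]] := IH (ltnW k'k).
  pose u := fun q : nat => t k' + q%:R / M%:R * (t k'.+1 - t k').
  have tk1 := tmono k' k'k.
  have tb := part_bounds ht (ltnW k'k).
  have tb1 := part_bounds ht k'k.
  have u0 : u 0%N = t k' by rewrite /u mul0r mul0r addr0.
  have uM : u M = t k'.+1 by rewrite /u divff ?gt_eqF // mul1r addrC subrK.
  have ub : forall q, (q <= M)%N -> 0 <= u q <= 1.
    move=> q qM; have hq : 0 <= (q%:R / M%:R : R) <= 1.
      apply/andP; split; first by rewrite divr_ge0.
      by rewrite ler_pdivrMr // mul1r ler_nat.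
    move: hq tb tb1 => /andP [? ?] /andP [? ?] /andP [? ?].
    have : 0 <= (q%:R / M%:R : R) * (t k'.+1 - t k') <= t k'.+1 - t k'.
      apply/andP; split; first by rewrite mulr_ge0 // subr_ge0.
      by rewrite ler_piMl // subr_ge0.
    move=> /andP [? ?]; rewrite /u; apply/andP; split; lra.
  have umono : forall q, (q < M)%N -> u q <= u q.+1.
    move=> q qM; rewrite /u lerD2l ler_wpM2r ?subr_ge0 // ler_pM2r ?invr_gt0 //.
    by rewrite ler_nat.
  exists (K + M)%N, (gl K s u); split.
  - by rewrite glue_start.
  - by rewrite glue_end ?sK ?u0.
  - by apply: glue_mono => //; rewrite sK u0.
  - rewrite glue_psum ?sK ?u0 // /psum big_ord_recr /=; apply: lerD => //.
    rewrite -(big_mkord xpredT (fun i => enorm (g (u i.+1) - g (u i)))).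
    apply: le_trans (enorm_sum _ _).
    by rewrite telescope_sumr // uM u0.
  - move=> p pK; have [pK1|pK1] := ltnP p K.
      by rewrite !gl_left //; [exact: ssm | exact: ltnW].
    rewrite !gl_right ?sK ?u0 //; last exact: leqW.
    rewrite subSn //; apply: small; [apply: ub; lia | apply: ub; lia|].
    have -> : u (p - K).+1 - u (p - K)%N = (t k'.+1 - t k') / M%:R.
      by rewrite /u -addn1 natrD; field; rewrite gt_eqF.
    rewrite normrM ger0_norm ?subr_ge0 // ger0_norm ?invr_ge0 ?ler0n //.
    apply: (le_lt_trans (y := 1 / M%:R)).
      rewrite ler_pM2r ?invr_gt0 //; move: tb tb1 => /andP[? ?] /andP[? ?]; lra.
    by rewrite mul1r -(invrK h) ltf_pV2 ?posrE ?invr_gt0.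
have [K [s [s0 sK smono sps ssm]]] := main k (leqnn k).
exists K, s; split => //; split; first by rewrite s0.
by split; first by rewrite sK.
Qed.
End Ref.
Section Chain.
Context {R : realType} {n : nat}.
Local Notation V := 'rV[R]_n.
Variable Om : set V.
Implicit Types (g : R -> V) (x y : V) (t : nat -> R) (k : nat).

Fixpoint reach (S0 : set V) (e : R) (m : nat) (x : V) : Prop :=
  match m with
  | 0%N => S0 x
  | m'.+1 => exists z, reach S0 e m' z /\ closure Om x /\ (idist Om z x < e%:E)%E
  end.

Lemma chain S0 e p x L : 0 < e -> S0 p -> (idist Om p x < L%:E)%E ->
  exists m, reach S0 e m x /\ m%:R * e <= 4 * L + e.
Proof.
move=> e0 Sp /idist_ltP [g [hg hpl]].
have [gc [g0 [g1 gC]]] := hg.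
have [r hr] : exists r, path_length g = r%:E.
  move: hpl (pl_ge0 g); case: (path_length g) => [r _ _| //| //]; by exists r.
have e4 : 0 < e / 4 by rewrite divr_gt0.
have : ((r - e / 4)%:E < ereal_sup [set l | exists k t, is_partition01 k t /\
     l = (\sum_(i < k) enorm (g (t i.+1) - g (t i)))%:E])%E.
  by rewrite -[ereal_sup _]/(path_length g) hr lte_fin; lra.
move=> /ereal_sup_gt [_ [k [t [ht ->]]]]; rewrite lte_fin => hkt.
have [K [s [hs hps hsm]]] := refine hg ht e4.
have [s0 [sK smono]] := hs.
have hS : psum g K s <= r by rewrite -lee_fin -hr; exact: psum_le.
have hS' : r - e / 4 < psum g K s by apply: lt_le_trans hkt hps.
pose a := fun q => enorm (g (s q.+1) - g (s q)).
have hsub : forall i j, (i <= j <= K)%N ->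
    (idist Om (g (s i)) (g (s j)) <= (r - psum g K s + \sum_(i <= q < j) a q)%:E)%E.
  by move=> i j hij; apply: (subpath_bound hg _ hs hij); rewrite hr.
have cl : forall q, (q <= K)%N -> closure Om (g (s q)).
  by move=> q qK; apply: gC; exact: (part_bounds hs qK).
have greedy : forall j, (j <= K)%N -> exists i c, [/\ (i <= j)%N, reach S0 e c (g (s i)),
    c%:R * (e / 4) <= \sum_(0 <= q < i) a q & \sum_(i <= q < j) a q < e / 2].
  elim=> [_|j IH jK].
    exists 0%N, 0%N; split => //=; first by rewrite s0 g0.
      by rewrite mul0r big_geq.
    by rewrite big_geq // divr_gt0.
  have [i [c [ij hc hci hblk]]] := IH (ltnW jK).
  have aj : a j < e / 4 by apply: hsm.
  have aj0 : 0 <= a j by apply: enorm_ge0.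
  case: (ltP (\sum_(i <= q < j.+1) a q) (e / 2)) => hb.
    by exists i, c; split => //; exact: leqW.
  move: hb; rewrite big_nat_recr //= => hb.
  exists j, c.+1; split => //.
  - exists (g (s i)); split => //; split; first exact: cl (ltnW jK).
    apply: le_lt_trans (hsub i j _) _; first by rewrite ij ltnW.
    rewrite lte_fin; lra.
  - rewrite (big_cat_nat (n := i) (leq0n i) ij) /= -addn1 natrD mulrDl mul1r.
    lra.
  - by rewrite big_nat1 //; lra.
have [i [c [iK hc hci hblk]]] := greedy K (leqnn K).
exists c.+1; split.
  exists (g (s i)); split => //; split; first by rewrite -g1; apply: gC; rewrite ler01 lexx.
  rewrite -g1 -sK; apply: le_lt_trans (hsub i K _) _; first by rewrite iK leqnn.
  by rewrite lte_fin; lra.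
have hsum : \sum_(0 <= q < i) a q <= psum g K s.
  rewrite psum_nat (big_cat_nat (n := i) (leq0n i) iK) /= lerDl.
  by apply: sumr_ge0 => q _; exact: enorm_ge0.
have hL : r < L by rewrite -lte_fin -hr.
rewrite -addn1 natrD mulrDl mul1r.
have : c%:R * e <= 4 * psum g K s.
  have -> : c%:R * e = 4 * (c%:R * (e / 4)) by field.
  by rewrite ler_pM2l //; apply: le_trans hci hsum.
lra.
Qed.
End Chain.
Section Comp.
Context {R : realType}.

Lemma comparison {T : Type} (Cl Om : set T) (B : T -> set T) (u v : T -> R) (c0 c : R) :
  c0 < c ->
  (exists Mu, forall x, Cl x -> u x <= Mu) ->
  (exists mv, forall x, Cl x -> mv <= v x) ->
  (forall x, Cl x -> ~ Om x -> u x <= v x) ->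
  (forall x, Om x -> Cl x) ->
  (forall x, Om x -> B x `<=` Cl) ->
  (forall x, Om x -> forall y1 S, B x y1 -> (forall y, B x y -> u y <= S) ->
     - c0 <= u y1 + S - 2 * u x) ->
  (forall x, Om x -> v x < u x -> exists y1 S, [/\ B x y1,
     (forall y, B x y -> v y <= S) & v y1 + S - 2 * v x <= - c]) ->
  forall x, Cl x -> u x <= v x.
Proof.
move=> cc [Mu hMu] [mv hmv] hbd hOC hBC hdpp hbar x0 Cx0.
rewrite leNgt; apply/negP => hx0.
pose E := [set u x - v x | x in Cl].
have ubE : ubound E (Mu - mv).
  by move=> _ [x Cx <-]; have := hMu x Cx; have := hmv x Cx; lra.
have hE : has_sup E by split; [exists (u x0 - v x0), x0 | exists (Mu - mv)].
set M := sup E.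
have hM0 : u x0 - v x0 <= M by apply: ub_le_sup; [exists (Mu - mv) | exists x0].
have Mpos : 0 < M by lra.
pose tau := Num.min M (c - c0) / 4.
have tau0 : 0 < tau by rewrite divr_gt0 // lt_min Mpos subr_gt0 cc.
have tauM : tau <= M / 4 by rewrite ler_pM2r // ge_min lexx.
have tauc : tau <= (c - c0) / 4 by rewrite ler_pM2r // ge_min lexx orbT.
have [_ [x Cx <-] hx] := sup_adherent tau0 hE.
have hx' : v x < u x by rewrite -/M in hx; lra.
have Ox : Om x.
  apply: contrapT => nO; have := hbd x Cx nO; lra.
have [y1 [S [By1 hS hv]]] := hbar x Ox hx'.
have hup : forall y, Cl y -> u y - v y <= M.
  by move=> y Cy; apply: ub_le_sup; [exists (Mu - mv) | exists y].
have := hdpp x Ox y1 (S + M) By1.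
have hB : forall y, B x y -> u y <= S + M.
  move=> y By; have := hup y (hBC x Ox y By); have := hS y By; lra.
move=> /(_ hB) h.
have := hup y1 (hBC x Ox y1 By1).
rewrite -/M in hx.
lra.
Qed.
End Comp.
Section Q.
Context {R : realType}.
Variables (b tp : R).
Hypothesis b0 : 0 < b.
Hypothesis tp0 : 0 <= tp.

Definition qf (t : R) := b * tp * t - b * t ^+ 2 / 2.
Definition kk (t : R) := qf (Num.min t tp).

Lemma qf_mono t1 t2 : t1 <= t2 -> t2 <= tp -> qf t1 <= qf t2.
Proof.
move=> h1 h2; rewrite /qf -subr_ge0.
have -> : b * tp * t2 - b * t2 ^+ 2 / 2 - (b * tp * t1 - b * t1 ^+ 2 / 2) =
  b * ((t2 - t1) * (tp - (t1 + t2) / 2)) by ring.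
apply: mulr_ge0; first exact: ltW.
apply: mulr_ge0; lra.
Qed.

Lemma qf_max t : qf t <= qf tp.
Proof.
rewrite -subr_ge0 /qf.
have -> : b * tp * tp - b * tp ^+ 2 / 2 - (b * tp * t - b * t ^+ 2 / 2) = b * ((tp - t) ^+ 2 / 2)
  by field.
by apply: mulr_ge0; [exact: ltW | rewrite divr_ge0 // sqr_ge0].
Qed.

Lemma qf_ge0 t : 0 <= t -> t <= tp -> 0 <= qf t.
Proof.
move=> t0 ttp; have := qf_mono t0 ttp; rewrite /qf; rewrite mulr0 expr0n /= mulr0 mul0r subrr.
by [].
Qed.

Lemma qf_lin t : 0 <= t -> qf t <= b * tp * t.
Proof.
move=> t0; rewrite /qf lerBlDr lerDl; apply: divr_ge0 => //; apply: mulr_ge0;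
  [exact: ltW | exact: sqr_ge0].
Qed.

Lemma kk_mono t1 t2 : t1 <= t2 -> kk t1 <= kk t2.
Proof.
move=> h; rewrite /kk; apply: qf_mono; last by rewrite ge_min lexx orbT.
rewrite le_min; apply/andP; split; rewrite ge_min ?h ?lexx ?orbT //.
Qed.

Lemma kk_ge0 t : 0 <= t -> 0 <= kk t.
Proof.
move=> t0; rewrite /kk; apply: qf_ge0; last by rewrite ge_min lexx orbT.
by rewrite le_min t0 tp0.
Qed.

Lemma kk_le t : kk t <= qf tp.
Proof. exact: qf_max. Qed.

Lemma kk_lin t : 0 <= t -> kk t <= b * tp * t.
Proof.
move=> t0; rewrite /kk; apply: le_trans (qf_lin _) _; first by rewrite le_min t0 tp0.
by rewrite ler_wpM2l ?mulr_ge0 ?ge_min ?lexx // ltW.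
Qed.

Lemma kk_eq t : t <= tp -> kk t = qf t.
Proof. by move=> h; rewrite /kk min_l. Qed.

Lemma kk_second s e : 0 <= s - e -> s + e <= tp -> 0 <= e ->
  kk (s - e) + kk (s + e) - 2 * kk s = - (b * e ^+ 2).
Proof.
move=> h1 h2 e0; rewrite !kk_eq; [| lra | lra | lra].
by rewrite /qf; field.
Qed.
End Q.
Section Bar.
Context {R : realType} {n : nat}.
Local Notation V := 'rV[R]_n.
Variables (Om S0 : set V) (e : R).
Implicit Types (x y : V).

Definition reachable x := exists m, reach Om S0 e m x.

Definition mm x : nat :=
  match pselect (reachable x) with
  | left h => @ex_minn (fun m => `[< reach Om S0 e m x >])
       (let: ex_intro m hm := h in ex_intro _ m (asboolT hm))
  | right _ => 0%N
  end.

Lemma mmP x : reachable x -> reach Om S0 e (mm x) x /\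
  forall m, reach Om S0 e m x -> (mm x <= m)%N.
Proof.
rewrite /mm; case: pselect => // h _.
case: ex_minnP => m /asboolP hm hmin; split => // m' hm'.
by apply: hmin; apply/asboolP.
Qed.

Lemma reach_cl m x : S0 `<=` closure Om -> reach Om S0 e m x -> closure Om x.
Proof. by move=> h; case: m => [|m] /=; [apply: h | move=> [z [_ []]]]. Qed.

Definition bar b tp base x : R := base +
  (if `[< reachable x >] then
     kk b tp (e * (mm x)%:R + (if `[< Om x >] then e else 0))
   else qf b tp tp).

Lemma bar_ge b tp base x : 0 < b -> 0 <= tp -> 0 <= e -> base <= bar b tp base x.
Proof.
move=> b0 tp0 e0; rewrite /bar lerDl; case: ifP => _.
  apply: kk_ge0 => //; apply: addr_ge0; first by rewrite mulr_ge0.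
  by case: ifP.
by apply: qf_ge0.
Qed.

Lemma bar_le b tp base x : 0 < b -> 0 <= tp -> bar b tp base x <= base + qf b tp tp.
Proof. by move=> b0 tp0; rewrite /bar lerD2l; case: ifP => _ //; exact: kk_le. Qed.

Lemma bar_reach b tp base x : reachable x -> bar b tp base x =
  base + kk b tp (e * (mm x)%:R + (if `[< Om x >] then e else 0)).
Proof. by move=> h; rewrite /bar (asboolT h). Qed.

Lemma bar_super b tp base x : 0 < b -> 0 <= tp -> 0 < e ->
  S0 `<=` closure Om -> (forall y, S0 y -> ~ Om y) ->
  Om x -> reachable x -> e * ((mm x)%:R + 1) + e <= tp ->
  exists y1 S, [/\ iball Om x e y1, (forall y, iball Om x e y -> bar b tp base y <= S) &
    bar b tp base y1 + S - 2 * bar b tp base x <= - (b * e ^+ 2)].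
Proof.
move=> b0 tp0 e0 S0cl S0O Ox rx htp.
have [rmx mmin] := mmP rx.
have Ox' : `[< Om x >] = true by apply/asboolP.
have Clx : closure Om x by apply: subset_closure.
case Em : (mm x) rmx htp => [|m] rmx htp.
  by move: rmx => /= /S0O.
have rmx0 := rmx.
move: rmx => /= [z [rz [_ hz]]].
have m0 : (0 : R) <= m%:R by rewrite ler0n.
have em : 0 <= e * m%:R by rewrite mulr_ge0 // ltW.
have hm1 : (m.+1)%:R = m%:R + 1 :> R by rewrite -natr1.
have hm2 : (m.+2)%:R = m%:R + 2 :> R by rewrite -addn2 natrD.
rewrite hm1 in htp.
exists z, (base + kk b tp (e * (m%:R + 1) + e + e)); split.
{ split; first exact: reach_cl rz.
  by apply: le_lt_trans (idist_sym _ _ _) hz. }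
{ move=> y [Cly hy].
  have ry : reach Om S0 e m.+2 y by exists x.
  have ryr : reachable y by exists m.+2.
  have [ry' ymin] := mmP ryr.
  rewrite bar_reach // lerD2l; apply: (kk_mono _ b0).
  have := ymin _ ry; rewrite -(ler_nat R) hm2 => hm.
  have h1 : e * (mm y)%:R <= e * (m%:R + 2) by rewrite ler_pM2l.
  have hs : (if `[< Om y >] then e else 0) <= e.
    by case: ifP => _; [exact: lexx|exact: ltW].
  lra. }
have rz' : reachable z by exists m.
have [_ zmin] := mmP rz'.
rewrite !bar_reach // Em Ox' hm1.
have hz1 : kk b tp (e * (mm z)%:R + (if `[< Om z >] then e else 0)) <= kk b tp (e * m%:R + e).
  apply: (kk_mono _ b0); have := zmin _ rz; rewrite -(ler_nat R) => hm.
  have h1 : e * (mm z)%:R <= e * m%:R by rewrite ler_pM2l.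
  have hs : (if `[< Om z >] then e else 0) <= e.
    by case: ifP => _; [exact: lexx|exact: ltW].
  lra.
have h2 := kk_second b (tp := tp) (s := e * (m%:R + 1) + e) (e := e).
have E1 : e * (m%:R + 1) + e - e = e * m%:R + e by ring.
rewrite E1 in h2.
have h3 := h2 ltac:(lra) ltac:(lra) (ltW e0).
lra.
Qed.
End Bar.
Section Steps.
Context {R : realType} {n : nat}.
Local Notation V := 'rV[R]_n.
Implicit Types (x y : V).

Definition Hdpp (Om : set V) (e : R) (u : V -> R) (c0 : R) :=
  forall x, Om x -> forall y1 S, iball Om x e y1 -> (forall y, iball Om x e y -> u y <= S) ->
    - c0 <= u y1 + S - 2 * u x.

Lemma bdryP (Om : set V) y : open Om -> bdry Om y <-> closure Om y /\ ~ Om y.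
Proof. by move=> /interior_id oO; rewrite /bdry oO. Qed.

Lemma reach_norm (Om : set V) e y0 m y : reach Om [set y0] e m y -> `|y - y0| <= m%:R * e.
Proof.
elim: m y => [|m IH] y /=; first by move=> ->; rewrite subrr normr0 mul0r.
move=> [z [rz [_ hz]]].
have h1 := IH z rz.
have h2 : `|y - z| < e.
  by rewrite -lte_fin; apply: le_lt_trans (idist_ge_norm _ _ _) hz.
rewrite (_ : y - y0 = (y - z) + (z - y0)); last by rewrite addrA subrK.
apply: le_trans (ler_normD _ _) _; rewrite -natr1 mulrDl mul1r; lra.
Qed.

Lemma step1 (Om : set V) (e Mf G W : R) (u g : V -> R) :
  open Om -> 0 < e -> e <= 1 -> 0 <= Mf -> 0 <= W ->
  (forall x, Om x -> exists y, bdry Om y /\ (idist Om y x < W%:E)%E) ->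
  (forall y, bdry Om y -> g y <= G) ->
  (exists M, forall x, closure Om x -> u x <= M) ->
  (forall y, bdry Om y -> u y = g y) ->
  Hdpp Om e u (e ^+ 2 * Mf) ->
  forall x, closure Om x -> u x <= G + qf (Mf + 1) (4 * W + 4) (4 * W + 4).
Proof.
move=> oO e0 e1 Mf0 W0 hW hg hu hug hdpp.
set b := Mf + 1; set tp := 4 * W + 4.
have b0 : 0 < b by rewrite /b; lra.
have tp0 : 0 <= tp by rewrite /tp; lra.
pose v := bar Om (bdry Om) e b tp G.
have S0cl : bdry Om `<=` closure Om by move=> y /(bdryP y oO) [].
have S0O : forall y, bdry Om y -> ~ Om y by move=> y /(bdryP y oO) [].
suff key : forall x, closure Om x -> u x <= v x.
  by move=> x cx; apply: le_trans (key x cx) _; apply: bar_le.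
apply: (comparison (c0 := e ^+ 2 * Mf) (c := b * e ^+ 2) (Om := Om)
  (B := fun x => iball Om x e)).
- rewrite mulrC ltr_pM2r ?exprn_gt0 // /b; lra.
- exact: hu.
- by exists G => x _; apply: bar_ge => //; exact: ltW.
- move=> x cx nO; have bx : bdry Om x by apply/bdryP.
  rewrite hug //; apply: le_trans (hg x bx) _; apply: bar_ge => //; exact: ltW.
- by move=> x; exact: subset_closure.
- by move=> x _ y [].
- exact: hdpp.
- move=> x Ox _.
  have [y [yb hy]] := hW x Ox.
  have [m [rm hm]] := chain e0 yb hy.
  have rx : reachable Om (bdry Om) e x by exists m.
  have [_ mmin] := mmP rx.
  apply: bar_super => //.
  have := mmin m rm; rewrite -(ler_nat R) => hmm.
  have : e * (mm Om (bdry Om) e x)%:R <= e * m%:R by rewrite ler_pM2l.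
  rewrite mulrC in hm; rewrite /tp; lra.
Qed.

Lemma step2 (Om : set V) (e Mf G U r eta tp : R) (u g : V -> R) (y0 : V) :
  open Om -> 0 < e -> e <= 1 -> 0 <= Mf -> 0 <= G -> 0 < eta -> 1 <= tp ->
  bdry Om y0 ->
  (forall y, bdry Om y -> `|g y| <= G) ->
  (forall y, bdry Om y -> `|y - y0| < r -> g y <= g y0 + eta) ->
  (forall x, closure Om x -> u x <= U) ->
  (forall y, bdry Om y -> u y = g y) ->
  Hdpp Om e u (e ^+ 2 * Mf) ->
  U - (g y0 + eta) <= qf (Mf + 1) tp (tp - 1) ->
  2 * G <= qf (Mf + 1) tp (Num.min r tp) ->
  forall x m, Om x -> reach Om [set y0] e m x ->
    u x <= g y0 + eta + (Mf + 1) * tp * (e * m%:R + e).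
Proof.
move=> oO e0 e1 Mf0 G0 eta0 tp1 hy0 hg hgc hU hug hdpp hq1 hq2.
set b := Mf + 1; set base := g y0 + eta.
have b0 : 0 < b by rewrite /b; lra.
have tp0 : 0 <= tp by lra.
pose v := bar Om [set y0] e b tp base.
have S0cl : [set y0] `<=` closure Om by move=> y ->; move: hy0 => /(bdryP y0 oO) [].
have S0O : forall y, [set y0] y -> ~ Om y by move=> y ->; move: hy0 => /(bdryP y0 oO) [].
have gy0 : - G <= g y0 by have := hg y0 hy0; rewrite ler_norml => /andP [].
have qtp : qf b tp (Num.min r tp) <= qf b tp tp by apply: qf_max.
have qtp1 : qf b tp (tp - 1) <= qf b tp tp by apply: qf_max.
suff key : forall x, closure Om x -> u x <= v x.
  move=> x m Ox rm; apply: le_trans (key x (subset_closure Ox)) _.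
  have rx : reachable Om [set y0] e x by exists m.
  have [_ mmin] := mmP rx.
  rewrite /v bar_reach // lerD2l (asboolT Ox).
  have hmm := mmin m rm; rewrite -(ler_nat R) in hmm.
  have m0 : (0 : R) <= (mm Om [set y0] e x)%:R by rewrite ler0n.
  apply: le_trans (kk_lin b0 tp0 _) _; first by rewrite addr_ge0 ?mulr_ge0 // ltW.
  apply: ler_wpM2l; first by rewrite mulr_ge0 // ltW.
  by rewrite lerD2r ler_pM2l.
apply: (comparison (c0 := e ^+ 2 * Mf) (c := b * e ^+ 2) (Om := Om)
  (B := fun x => iball Om x e)).
- rewrite mulrC ltr_pM2r ?exprn_gt0 // /b; lra.
- by exists U.
- by exists base => x _; apply: bar_ge => //; exact: ltW.
- move=> y cy nO; have bY : bdry Om y by apply/bdryP.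
  rewrite hug //.
  have gyG : g y <= G by have := hg y bY; rewrite ler_norml => /andP [].
  case: (pselect (reachable Om [set y0] e y)) => ry; last first.
    rewrite /v /bar (asboolF ry) /base; lra.
  rewrite /v bar_reach // (asboolF nO) addr0.
  case: (ltP `|y - y0| r) => hr.
    have := hgc y bY hr; have : 0 <= kk b tp (e * (mm Om [set y0] e y)%:R).
      by apply: kk_ge0 => //; rewrite mulr_ge0 ?ler0n // ltW.
    rewrite /base; lra.
  have [rmy _] := mmP ry.
  have hn := reach_norm rmy.
  have : kk b tp r <= kk b tp (e * (mm Om [set y0] e y)%:R).
    by apply: kk_mono => //; rewrite mulrC; apply: le_trans hn.
  rewrite /kk /base; lra.
- by move=> x; exact: subset_closure.
- by move=> x _ y [].
- exact: hdpp.
- move=> x Ox hvu.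
  have hvU : v x < U by apply: lt_le_trans hvu (hU x (subset_closure Ox)).
  case: (pselect (reachable Om [set y0] e x)) => rx; last first.
    by move: hvU; rewrite /v /bar (asboolF rx) /base; lra.
  apply: bar_super => //.
  move: hvU; rewrite /v bar_reach // (asboolT Ox) => hvU.
  set s := e * (mm Om [set y0] e x)%:R + e in hvU *.
  have s0 : 0 <= s by rewrite /s addr_ge0 ?mulr_ge0 ?ler0n // ltW.
  case: (ltP s (tp - 1)) => hs.
    have -> : e * ((mm Om [set y0] e x)%:R + 1) + e = s + e by rewrite /s; ring.
    lra.
  have : kk b tp (tp - 1) <= kk b tp s by apply: kk_mono.
  rewrite (kk_eq b (t := tp - 1)); last lra.
  rewrite /base in hvU; lra.
Qed.
End Steps.
Section Final.
Context {R : realType} {n : nat}.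
Local Notation V := 'rV[R]_n.
Implicit Types (x y : V).

Lemma eps_small (eps : nat -> R) : eps @ \oo --> (0 : R) ->
  forall d, 0 < d -> exists N : nat, forall i, (N <= i)%N -> `|eps i| < d.
Proof.
move=> /cvgrPdist_lt h d d0; have [N _ hN] := h d d0.
exists N => i Ni; rewrite -normrN -(add0r (- _)); exact: hN.
Qed.

Lemma gcont (Om : set V) (g : V -> R) y0 : {within bdry Om, continuous g} -> bdry Om y0 ->
  forall eta, 0 < eta -> exists2 r, 0 < r &
    forall y, bdry Om y -> `|y - y0| < r -> `|g y - g y0| < eta.
Proof.
rewrite subspace_continuousP => h hy0 eta eta0.
have := h y0 hy0 => /cvgrPdist_lt /(_ eta eta0).
rewrite near_withinE => /nbhs_ballP [r /= r0 hr].
exists r => // y yb yr; rewrite -normrN opprB; apply: hr => //.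
by rewrite -ball_normE /ball_ /= -normrN opprB.
Qed.

Lemma lb_le_inf (E : set R) a : E !=set0 -> (forall z, E z -> a <= z) -> a <= inf E.
Proof.
move=> [z Ez] h; rewrite /inf lerNr; apply: ge_sup; first by exists (- z), z.
by move=> _ [w Ew <-]; rewrite lerNl opprK; apply: h.
Qed.

Lemma hdpp_of (Om : set V) e (u f : V -> R) Mf :
  (exists M, forall x, closure Om x -> `|u x| <= M) ->
  (forall x, Om x -> `|f x| <= Mf) ->
  (forall x, Om x -> eps_lap Om e u x = e ^+ 2 * f x) ->
  Hdpp Om e u (e ^+ 2 * Mf) /\ Hdpp Om e (fun x => - u x) (e ^+ 2 * Mf).
Proof.
move=> [Mu hMu] hf hdpp.
have hfx : forall x, Om x -> - (e ^+ 2 * Mf) <= e ^+ 2 * f x <= e ^+ 2 * Mf.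
  move=> x Ox; have := hf x Ox; rewrite ler_norml => /andP [h1 h2].
  have e2 : 0 <= e ^+ 2 by exact: sqr_ge0.
  apply/andP; split; last by rewrite ler_wpM2l.
  by rewrite -mulrN ler_wpM2l.
have lbE : forall x, has_lbound (u @` iball Om x e).
  move=> x; exists (- Mu) => _ [y [cy _] <-].
  by have := hMu y cy; rewrite ler_norml => /andP [].
have ubE : forall x, has_ubound (u @` iball Om x e).
  move=> x; exists Mu => _ [y [cy _] <-].
  by have := hMu y cy; rewrite ler_norml => /andP [].
split.
  move=> x Ox y1 S By1 hS.
  have h1 : inf (u @` iball Om x e) <= u y1 by apply: (ge_inf (lbE x)); exists y1.
  have h2 : sup (u @` iball Om x e) <= S.
    by apply: ge_sup; [exists (u y1), y1 | move=> _ [y By <-]; apply: hS].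
  have := hdpp x Ox; rewrite /eps_lap => h.
  have := hfx x Ox => /andP [h3 _]; lra.
move=> x Ox y1 S By1 hS.
have h1 : u y1 <= sup (u @` iball Om x e) by apply: ub_le_sup => //; exists y1.
have h2 : - S <= inf (u @` iball Om x e).
  apply: lb_le_inf; first by exists (u y1), y1.
  by move=> _ [y By <-]; have := hS y By; lra.
have := hdpp x Ox; rewrite /eps_lap => h.
have := hfx x Ox => /andP [_ h3]; lra.
Qed.

End Final.

Unset Implicit Arguments.

Theorem lemma5p4 (R : realType) (n : nat) (Om : set 'rV[R]_n)
  (f : 'rV[R]_n -> R) (g : 'rV[R]_n -> R) (eps : nat -> R)
  (u : nat -> 'rV[R]_n -> R) :
  domain Om ->
  (width Om < +oo)%E ->
  (exists M : R, forall x, Om x -> `|f x| <= M) ->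
  {within bdry Om, continuous g} ->
  (exists M : R, forall y, bdry Om y -> `|g y| <= M) ->
  (forall i, 0 < eps i) ->
  eps @ \oo --> (0 : R) ->
  (forall i, exists M : R, forall x, closure Om x -> `|u i x| <= M) ->
  (forall i x, Om x -> eps_lap Om (eps i) (u i) x = eps i ^+ 2 * f x) ->
  (forall i y, bdry Om y -> u i y = g y) ->
  forall y0, bdry Om y0 ->
  forall e : R, 0 < e ->
  exists delta : R, 0 < delta /\ exists N : nat,
    forall x, Om x -> (idist Om y0 x <= delta%:E)%E ->
    forall i, (N < i)%N -> `|u i x - g y0| <= e.
Proof.
move=> hdom hwid [Mf0 hf] gc [Mg hg] eps0 epscv hub hdpp hbd y0 hy0 e e0.
have oO : open Om by case: hdom => _ [].
set Mf := `|Mf0|.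
have hf' : forall x, Om x -> `|f x| <= Mf.
  by move=> x Ox; apply: le_trans (hf x Ox) (ler_norm _).
have Mf0' : 0 <= Mf by exact: normr_ge0.
set G := `|Mg|.
have hg' : forall y, bdry Om y -> `|g y| <= G.
  by move=> y yb; apply: le_trans (hg y yb) (ler_norm _).
have hgn : forall y, bdry Om y -> `|- g y| <= G by move=> y yb; rewrite normrN hg'.
have G0 : 0 <= G by exact: normr_ge0.
have gy0 : - G <= g y0 <= G by rewrite -ler_norml hg'.
have [W [W0 hW]] : exists W : R, 0 <= W /\
    forall x, Om x -> exists y, bdry Om y /\ (idist Om y x < W%:E)%E.
  have [Wr hWr] : exists Wr : R, (width Om <= Wr%:E)%E.
    move: hwid; case: (width Om) => [r _| //| _]; [exists r | exists 0%R]; by rewrite ?lexx ?leNye.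
  exists (`|Wr| + 1); split; first by have := normr_ge0 Wr; lra.
  move=> x Ox.
  have : (ereal_inf [set idist Om y x | y in bdry Om] < (`|Wr| + 1)%:E)%E.
    apply: (le_lt_trans (y := width Om)); first by apply: ereal_sup_ubound; exists x.
    apply: le_lt_trans hWr _; rewrite lte_fin.
    by apply: le_lt_trans (ler_norm Wr) _; rewrite ltrDl.
  by move=> /ereal_inf_lt [_ [y yb <-] hy]; exists y.
set b := Mf + 1.
set tp1 := 4 * W + 4.
set U := G + qf b tp1 tp1.
have b0 : 0 < b by rewrite /b; lra.
have b1 : 1 <= b by rewrite /b; lra.
have tp10 : 0 <= tp1 by rewrite /tp1; lra.
have U0 : 0 <= U by rewrite /U addr_ge0 // qf_ge0.
have e20 : 0 < e / 2 by rewrite divr_gt0.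
have [r r0 hr] := gcont gc hy0 e20.
set r' := Num.min r 1.
have r'0 : 0 < r' by rewrite lt_min r0 ltr01.
have r'1 : r' <= 1 by rewrite ge_min lexx orbT.
have r'r : r' <= r by rewrite ge_min lexx.
set A := 4 * (U + 2 * G) / (b * r').
have A0 : 0 <= A.
  rewrite /A; apply: divr_ge0; first by lra.
  by rewrite mulr_ge0 // ltW.
have hbrA : b * r' * A = 4 * (U + 2 * G).
  by rewrite /A; field; rewrite !gt_eqF.
have bA : 4 * (U + 2 * G) <= b * A.
  rewrite -hbrA -mulrA [X in _ <= X]mulrC [b * _]mulrC; apply: ler_wpM2r.
    by rewrite ltW.
  by rewrite -[X in _ <= X]mul1r; apply: ler_wpM2r.
set tp2 := 2 + A.
have tp21 : 1 <= tp2 by rewrite /tp2; lra.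
have q1 : U + G <= qf b tp2 (tp2 - 1).
  rewrite /qf /tp2.
  have : 0 <= b * (3 + 3 * A + A ^+ 2) by rewrite mulr_ge0 ?ltW //; nra.
  nra.
have q2 : 2 * G <= qf b tp2 (Num.min r' tp2).
  rewrite min_l; last by rewrite /tp2; lra.
  rewrite /qf /tp2.
  have : b * r' * A <= b * r' * (2 + A - r' / 2).
    rewrite ler_wpM2l ?mulr_ge0 // ?ltW //; lra.
  have : 0 <= b * r' by rewrite mulr_ge0 // ltW.
  nra.
set K := b * tp2.
have K0 : 0 < K by rewrite /K mulr_gt0 // /tp2; lra.
set delta := e / (32 * K).
have d0 : 0 < delta by rewrite /delta divr_gt0 // mulr_gt0.
have dd : Num.min 1 (e / (8 * K)) > 0 by rewrite lt_min ltr01 divr_gt0 // mulr_gt0.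
have [N hN] := eps_small epscv dd.
exists delta; split => //; exists N.
move=> x Ox hdx i Ni.
have hei := hN i (ltnW Ni).
have ei0 := eps0 i.
rewrite gtr0_norm // lt_min in hei; move: hei => /andP [ei1 eiK].
have ei1' : eps i <= 1 by exact: ltW.
have hd2 : (idist Om y0 x < (2 * delta)%:E)%E.
  by apply: le_lt_trans hdx _; rewrite lte_fin; lra.
have [m [rm hm]] := chain (S0 := [set y0]) ei0 (erefl y0 : [set y0] y0) hd2.
have [hdu hdnu] := hdpp_of (hub i) hf' (hdpp i).
have [Mu hMu] := hub i.
have bndu : exists M, forall x, closure Om x -> u i x <= M.
  by exists Mu => z cz; apply: le_trans (ler_norm _) (hMu z cz).
have bndnu : exists M, forall x, closure Om x -> - u i x <= M.
  by exists Mu => z cz; apply: le_trans (ler_norm _) _; rewrite normrN hMu.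
have hgG : forall y, bdry Om y -> g y <= G.
  by move=> y yb; apply: le_trans (ler_norm _) (hg' y yb).
have hgnG : forall y, bdry Om y -> - g y <= G.
  by move=> y yb; apply: le_trans (ler_norm _) (hgn y yb).
have Uu := step1 oO ei0 ei1' Mf0' W0 hW hgG bndu (hbd i) hdu.
have hbdn : forall y, bdry Om y -> - u i y = - g y by move=> y yb; rewrite hbd.
have Unu := step1 oO ei0 ei1' Mf0' W0 hW hgnG bndnu hbdn hdnu.
have hgc : forall y, bdry Om y -> `|y - y0| < r' -> g y <= g y0 + e / 2.
  move=> y yb yr; have := hr y yb (lt_le_trans yr r'r).
  by rewrite ltr_norml => /andP [_ ?]; lra.
have hgnc : forall y, bdry Om y -> `|y - y0| < r' -> - g y <= - g y0 + e / 2.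
  move=> y yb yr; have := hr y yb (lt_le_trans yr r'r).
  by rewrite ltr_norml => /andP [? _]; lra.
have hq1 : U - (g y0 + e / 2) <= qf b tp2 (tp2 - 1) by lra.
have hq1n : U - (- g y0 + e / 2) <= qf b tp2 (tp2 - 1) by lra.
have s1 := step2 oO ei0 ei1' Mf0' G0 e20 tp21 hy0 hg' hgc Uu (hbd i) hdu hq1 q2 Ox rm.
have s2 := step2 oO ei0 ei1' Mf0' G0 e20 tp21 hy0 hgn hgnc Unu hbdn hdnu hq1n q2 Ox rm.
have fin : b * tp2 * (eps i * m%:R + eps i) <= e / 2.
  rewrite -/K.
  have h1 : eps i * m%:R + eps i <= 8 * delta + 2 * eps i by rewrite mulrC; lra.
  apply: le_trans (ler_wpM2l (ltW K0) h1) _.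
  have -> : K * (8 * delta + 2 * eps i) = e / 4 + 2 * (K * eps i).
    by rewrite /delta; field; rewrite gt_eqF.
  have : K * eps i <= K * (e / (8 * K)) by rewrite ler_wpM2l ?ltW.
  have -> : K * (e / (8 * K)) = e / 8 by field; rewrite gt_eqF.
  lra.
move: s1 s2; rewrite -/b /= => s1 s2.
rewrite ler_norml; apply/andP; split; lra.
Qed.
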